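(* Let $n=7$, let $\mathcal{P}_0=\{p_{135},p_{147},p_{16},p_{23},p_{246},p_{257},p_{367},p_{45}\}$, where $p_{ijk}$ (resp. $p_{ij}$) is declared incident exactly to $l_i,l_j,l_k$ (resp. $l_i,l_j$) among $l_1,\dots,l_7$, and let $\mathcal{A}=\{(i,p)\in\{1,\dots,7\}\times\mathcal{P}_0: p\prec l_i\}$. Let $H$ be the free abelian group with basis $x_1,\dots,x_7$, $A=H^{\mathcal{A}}$, $S_p=\sum_{j:\,p\prec l_j}x_j$. Let $U\subseteq A$ be the subgroup generated by: $a^{(0)}_{i,p}$ for $(i,p)\in\mathcal{A}$, $a^{(0)}_{i,p}(j,q)=\delta_{i,j}\delta_{p,q}x_i$; $a^{(1)}_{i,p}$ for $i\in\{1,\dots,7\}$, $p\in\mathcal{P}_0$, $a^{(1)}_{i,p}(j,q)=\delta_{p,q}x_i$; $a^{(2)}_{i,p_1,p_2}$ for $i\in\{1,\dots,7\}$, $p_1,p_2\in\mathcal{P}_0$ both incident to $l_i$, $a^{(2)}_{i,p_1,p_2}(j,q)=\delta_{i,j}\delta_{p_1,q}S_{p_2}$. Let $B\subseteq A$ be the subgroup of maps $a$ with $a(i,p)=a(i,q)$ whenever $(i,p),(i,q)\in\mathcal{A}$. Let $a_0\in A$ be the map with $a_0(4,p_{45})=x_7-x_6-x_3$, $a_0(2,p_{23})=-x_5$, $a_0(6,p_{246})=-x_7$, and $a_0(i,p)=0$ for all other $(i,p)\in\mathcal{A}$. Then the image of $a_0$ in $W=A/(U+B)$ is non-zero.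
   Context: This is the MacLane configuration $C_8$ (affine plane over $\mathbb{F}_3$ with one point deleted), with lines $l_0,\dots,l_7$ and points $p_{012},p_{034},p_{056},p_{07},p_{135},p_{147},p_{16},p_{23},p_{246},p_{257},p_{367},p_{45}$, where $p_{ijk}$ is incident exactly to $l_i,l_j,l_k$ and $p_{ij}$ exactly to $l_i,l_j$; $\mathcal{P}_0$ is the set of points not on $l_0$. *)

(* Defs.v *)
From HB Require Import structures.
From mathcomp Require Import all_boot all_order all_algebra.
Set Implicit Arguments. Unset Strict Implicit. Unset Printing Implicit Defensive.
Import GRing.Theory.
Local Open Scope ring_scope.

(* Lines l_1..l_7 are encoded as i : 'I_7 with l_{i+1} <-> i.
   Points of P_0 are encoded as p : 'I_8 in the order
   0:p135 1:p147 2:p16 3:p23 4:p246 5:p257 6:p367 7:p45. *)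
Definition lines_of (p : 'I_8) : seq nat :=
  nth [::] [:: [:: 1; 3; 5]; [:: 1; 4; 7]; [:: 1; 6]; [:: 2; 3];
               [:: 2; 4; 6]; [:: 2; 5; 7]; [:: 3; 6; 7]; [:: 4; 5]] p.

Definition inc (p : 'I_8) (i : 'I_7) : bool := (i : nat).+1 \in lines_of p.

Definition pt (k : nat) : 'I_8 := inord k.
Definition ln (k : nat) : 'I_7 := inord k.-1.

Definition H := {ffun 'I_7 -> int}.
Definition x (i : 'I_7) : H := [ffun k => (k == i)%:Z].
Definition S (p : 'I_8) : H := \sum_(j | inc p j) x j.

(* A = H^{\mathcal A}; we use functions on all pairs (i,p) and only ever
   compare them on the pairs of \mathcal A (see eqA). *)
Definition Aty := {ffun 'I_7 -> {ffun 'I_8 -> H}}.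
Definition eqA (a b : Aty) : Prop := forall i p, inc p i -> a i p = b i p.

Definition gen0 (i : 'I_7) (p : 'I_8) : Aty :=
  [ffun j => [ffun q => if (j == i) && (q == p) then x i else 0]].
Definition gen1 (i : 'I_7) (p : 'I_8) : Aty :=
  [ffun j => [ffun q => if q == p then x i else 0]].
Definition gen2 (i : 'I_7) (p1 p2 : 'I_8) : Aty :=
  [ffun j => [ffun q => if (j == i) && (q == p1) then S p2 else 0]].

Definition inU (u : Aty) : Prop :=
  exists (c0 c1 : 'I_7 -> 'I_8 -> int) (c2 : 'I_7 -> 'I_8 -> 'I_8 -> int),
    eqA u ((\sum_(i < 7) \sum_(p < 8 | inc p i) gen0 i p *~ c0 i p)
         + (\sum_(i < 7) \sum_(p < 8) gen1 i p *~ c1 i p)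
         + (\sum_(i < 7) \sum_(p1 < 8 | inc p1 i) \sum_(p2 < 8 | inc p2 i)
               gen2 i p1 p2 *~ c2 i p1 p2)).

Definition inB (b : Aty) : Prop :=
  forall i p q, inc p i -> inc q i -> b i p = b i q.

Definition inUB (a : Aty) : Prop :=
  exists u b, inU u /\ inB b /\ eqA a (u + b).

Definition a0 : Aty :=
  [ffun j => [ffun q =>
     if (j == ln 4) && (q == pt 7) then x (ln 7) - x (ln 6) - x (ln 3)
     else if (j == ln 2) && (q == pt 3) then - x (ln 5)
     else if (j == ln 6) && (q == pt 4) then - x (ln 7)
     else 0]].

(* Main.v *)
Require Import Defs.
From mathcomp Require Import all_boot all_order all_algebra.
Set Implicit Arguments. Unset Strict Implicit. Unset Printing Implicit Defensive.
Import GRing.Theory.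
Local Open Scope ring_scope.

Definition cfl : seq (seq (seq nat)) := [:: [:: [:: 0; 1; 2; 2; 1; 0; 1]; [:: 0; 0; 0; 0; 0; 0; 0]; [:: 0; 2; 1; 1; 2; 0; 2]; [:: 0; 0; 0; 0; 0; 0; 0]; [:: 0; 0; 0; 0; 0; 0; 0]; [:: 0; 0; 0; 0; 0; 0; 0]; [:: 0; 0; 0; 0; 0; 0; 0]; [:: 0; 0; 0; 0; 0; 0; 0]]; [:: [:: 0; 0; 0; 0; 0; 0; 0]; [:: 0; 0; 0; 0; 0; 0; 0]; [:: 0; 0; 0; 0; 0; 0; 0]; [:: 1; 0; 0; 1; 2; 2; 1]; [:: 2; 0; 0; 2; 1; 1; 2]; [:: 0; 0; 0; 0; 0; 0; 0]; [:: 0; 0; 0; 0; 0; 0; 0]; [:: 0; 0; 0; 0; 0; 0; 0]]; [:: [:: 1; 0; 0; 1; 2; 2; 1]; [:: 0; 0; 0; 0; 0; 0; 0]; [:: 0; 0; 0; 0; 0; 0; 0]; [:: 2; 0; 0; 2; 1; 1; 2]; [:: 0; 0; 0; 0; 0; 0; 0]; [:: 0; 0; 0; 0; 0; 0; 0]; [:: 0; 0; 0; 0; 0; 0; 0]; [:: 0; 0; 0; 0; 0; 0; 0]]; [:: [:: 0; 0; 0; 0; 0; 0; 0]; [:: 0; 0; 0; 0; 0; 0; 0]; [:: 0; 0; 0; 0; 0; 0; 0]; [:: 0; 0; 0; 0; 0; 0; 0]; [:: 1; 1; 2; 0; 0; 2; 2]; [:: 0; 0; 0; 0; 0; 0; 0];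 [:: 0; 0; 0; 0; 0; 0; 0]; [:: 2; 2; 1; 0; 0; 1; 1]]; [:: [:: 2; 2; 1; 0; 0; 1; 1]; [:: 0; 0; 0; 0; 0; 0; 0]; [:: 0; 0; 0; 0; 0; 0; 0]; [:: 0; 0; 0; 0; 0; 0; 0]; [:: 0; 0; 0; 0; 0; 0; 0]; [:: 0; 0; 0; 0; 0; 0; 0]; [:: 0; 0; 0; 0; 0; 0; 0]; [:: 1; 1; 2; 0; 0; 2; 2]]; [:: [:: 0; 0; 0; 0; 0; 0; 0]; [:: 0; 0; 0; 0; 0; 0; 0]; [:: 0; 1; 2; 2; 1; 0; 1]; [:: 0; 0; 0; 0; 0; 0; 0]; [:: 0; 2; 1; 1; 2; 0; 2]; [:: 0; 0; 0; 0; 0; 0; 0]; [:: 0; 0; 0; 0; 0; 0; 0]; [:: 0; 0; 0; 0; 0; 0; 0]]; [:: [:: 0; 0; 0; 0; 0; 0; 0]; [:: 0; 0; 0; 0; 0; 0; 0]; [:: 0; 0; 0; 0; 0; 0; 0]; [:: 0; 0; 0; 0; 0; 0; 0]; [:: 0; 0; 0; 0; 0; 0; 0]; [:: 0; 0; 0; 0; 0; 0; 0]; [:: 0; 0; 0; 0; 0; 0; 0]; [:: 0; 0; 0; 0; 0; 0; 0]]].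

Definition cf (i : 'I_7) (p : 'I_8) (k : 'I_7) : 'Z_3 :=
  (nth 0%N (nth [::] (nth [::] cfl i) p) k)%:R.


Definition o7 : seq 'I_7 := [:: @Ordinal 7 0 isT; @Ordinal 7 1 isT; @Ordinal 7 2 isT; @Ordinal 7 3 isT; @Ordinal 7 4 isT; @Ordinal 7 5 isT; @Ordinal 7 6 isT].
Definition o8 : seq 'I_8 := [:: @Ordinal 8 0 isT; @Ordinal 8 1 isT; @Ordinal 8 2 isT; @Ordinal 8 3 isT; @Ordinal 8 4 isT; @Ordinal 8 5 isT; @Ordinal 8 6 isT; @Ordinal 8 7 isT].
Lemma E7 : index_enum 'I_7 = o7.
Proof. have -> : index_enum 'I_7 = enum 'I_7 by rewrite enumT. apply: (inj_map val_inj); by rewrite val_enum_ord. Qed.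
Lemma E8 : index_enum 'I_8 = o8.
Proof. have -> : index_enum 'I_8 = enum 'I_8 by rewrite enumT. apply: (inj_map val_inj); by rewrite val_enum_ord. Qed.

Definition phiF (g : 'I_7 -> 'I_8 -> 'I_7 -> int) : 'Z_3 :=
  \sum_(i < 7) \sum_(p < 8 | inc p i) \sum_(k < 7) cf i p k * (g i p k)%:~R.

Definition G0 (i : 'I_7) (p : 'I_8) j q k : int :=
  if (j == i) && (q == p) then (k == i)%:Z else 0.
Definition G1 (i : 'I_7) (p : 'I_8) (j : 'I_7) q k : int :=
  if q == p then (k == i)%:Z else 0.
Definition G2 (i : 'I_7) (p1 p2 : 'I_8) j q k : int :=
  if (j == i) && (q == p1) then (inc p2 k)%:Z else 0.
Definition xi (i : nat) (k : 'I_7) : int := (k == i :> nat)%:Z.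
Definition A0 (j : 'I_7) (q : 'I_8) (k : 'I_7) : int :=
     if (j == 3 :> nat) && (q == 7 :> nat) then xi 6 k - xi 5 k - xi 2 k
     else if (j == 1 :> nat) && (q == 3 :> nat) then - xi 4 k
     else if (j == 5 :> nat) && (q == 4 :> nat) then - xi 6 k
     else 0.

Lemma c0_all : all (fun i => all (fun p => inc p i ==> (phiF (G0 i p) == 0)) o8) o7.
Proof. rewrite /phiF E7 E8 bigop.unlock; vm_compute; reflexivity. Qed.
Lemma c1_all : all (fun i => all (fun p => (phiF (G1 i p) == 0)) o8) o7.
Proof. rewrite /phiF E7 E8 bigop.unlock; vm_compute; reflexivity. Qed.
Lemma c2_all : all (fun i => all (fun p1 => all (fun p2 => inc p1 i ==> inc p2 i ==> (phiF (G2 i p1 p2) == 0)) o8) o8) o7.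
Proof. rewrite /phiF E7 E8 bigop.unlock; vm_compute; reflexivity. Qed.
Lemma a0_ne : phiF A0 != 0.
Proof. rewrite /phiF E7 E8 bigop.unlock; vm_compute; reflexivity. Qed.
Lemma cB_all : all (fun i => all (fun k => \sum_(p < 8 | inc p i) cf i p k == 0) o7) o7.
Proof. rewrite E8 bigop.unlock. vm_compute. reflexivity. Qed.


Definition rep (i : 'I_7) : 'I_8 := nth ord0 o8 (nth 0%N [:: 0; 3; 0; 1; 0; 2; 1]%N i).
Lemma rep_all : all (fun i => inc (rep i) i) o7.
Proof. vm_compute. reflexivity. Qed.

Lemma in7 (i : 'I_7) : i \in o7. Proof. by rewrite -E7 mem_index_enum. Qed.
Lemma in8 (i : 'I_8) : i \in o8. Proof. by rewrite -E8 mem_index_enum. Qed.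

Definition phi (a : Aty) : 'Z_3 := phiF (fun i p k => a i p k).

Lemma phiF_ext f g : (forall i p k, inc p i -> f i p k = g i p k) -> phiF f = phiF g.
Proof.
move=> h; apply: eq_bigr => i _; apply: eq_bigr => p hp; apply: eq_bigr => k _.
by rewrite h.
Qed.

Lemma phi_eqA a b : eqA a b -> phi a = phi b.
Proof. by move=> h; apply: phiF_ext => i p k hp; rewrite h. Qed.

Lemma phiD a b : phi (a + b) = phi a + phi b.
Proof.
rewrite /phi /phiF -big_split; apply: eq_bigr => i _; rewrite -big_split.
apply: eq_bigr => p _; rewrite -big_split; apply: eq_bigr => k _ /=.
by rewrite !ffunE intrD mulrDr.
Qed.

Lemma phi0 : phi 0 = 0.
Proof.
rewrite /phi /phiF big1 // => i _; rewrite big1 // => p _; rewrite big1 // => k _.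
by rewrite !ffunE mulr0.
Qed.

Lemma phiMz a z : phi (a *~ z) = phi a *~ z.
Proof.
rewrite /phi /phiF mulrz_suml; apply: eq_bigr => i _; rewrite mulrz_suml.
apply: eq_bigr => p _; rewrite mulrz_suml; apply: eq_bigr => k _ /=.
by rewrite !ffunMzE mulrzz intrM mulrA mulrzr.
Qed.

Lemma phi_sum (I : Type) (r : seq I) (P : pred I) (F : I -> Aty) :
  phi (\sum_(i <- r | P i) F i) = \sum_(i <- r | P i) phi (F i).
Proof. exact: (big_morph phi phiD phi0). Qed.

Lemma SE p k : S p k = (inc p k)%:Z.
Proof.
rewrite /S sum_ffunE (eq_bigr (fun j => (j == k)%:Z)); last first.
  by move=> j _; rewrite ffunE eq_sym.
case: (boolP (inc p k)) => h.
  rewrite (bigD1 k) //= eqxx big1 ?addr0 // => j /andP[_ /negbTE ->]; done.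
rewrite big1 // => j hj; case: eqP hj => // -> ; by rewrite (negbTE h).
Qed.

Lemma phi_gen0 i p : inc p i -> phi (gen0 i p) = 0.
Proof.
move=> h; have -> : phi (gen0 i p) = phiF (G0 i p).
  apply: phiF_ext => j q k _; rewrite /G0 !ffunE; case: ifP => _ //; by rewrite ffunE.
move/allP: c0_all => /(_ i (in7 i))/allP/(_ p (in8 p)); rewrite h => /eqP //.
Qed.

Lemma phi_gen1 i p : phi (gen1 i p) = 0.
Proof.
have -> : phi (gen1 i p) = phiF (G1 i p).
  apply: phiF_ext => j q k _; rewrite /G1 !ffunE; case: ifP => _ //; by rewrite ffunE.
by move/allP: c1_all => /(_ i (in7 i))/allP/(_ p (in8 p)) /eqP.
Qed.

Lemma phi_gen2 i p1 p2 : inc p1 i -> inc p2 i -> phi (gen2 i p1 p2) = 0.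
Proof.
move=> h1 h2; have -> : phi (gen2 i p1 p2) = phiF (G2 i p1 p2).
  apply: phiF_ext => j q k _; rewrite /G2 !ffunE; case: ifP => _ //; by rewrite ?SE ?ffunE.
move/allP: c2_all => /(_ i (in7 i))/allP/(_ p1 (in8 p1))/allP/(_ p2 (in8 p2)).
by rewrite h1 h2 => /eqP.
Qed.

Lemma eq_inord n (j : 'I_n.+1) m : (m <= n)%N -> (j == inord m) = (j == m :> nat).
Proof. by move=> h; rewrite -val_eqE /= inordK. Qed.

Lemma phi_a0 : phi a0 = phiF A0.
Proof.
apply: phiF_ext => j q k _; rewrite /A0 /xi /ln /pt !ffunE /= !eq_inord //.
by case: ifP => _; [rewrite !ffunE /= !eq_inord | case: ifP => _;
  [rewrite !ffunE /= !eq_inord | case: ifP => _; rewrite !ffunE /= ?eq_inord]].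
Qed.

Lemma phi_B b : inB b -> phi b = 0.
Proof.
move=> Hb; rewrite /phi /phiF big1 // => i _.
have hr : inc (rep i) i by move/allP: rep_all => /(_ i (in7 i)).
rewrite (eq_bigr (fun p => \sum_(k < 7) cf i p k * (b i (rep i) k)%:~R)); last first.
  by move=> p hp; rewrite (Hb i p (rep i) hp hr).
rewrite exchange_big /= big1 // => k _; rewrite -mulr_suml.
by move/allP: cB_all => /(_ i (in7 i))/allP/(_ k (in7 k))/eqP ->; rewrite mul0r.
Qed.

Theorem lemma3p2 : ~ inUB a0.
Proof.
move=> [u [b [[c0 [c1 [c2 Hu]]] [Hb Heq]]]].
have := phi_eqA Heq; rewrite phiD (phi_eqA Hu) !phiD (phi_B Hb).
have -> : phi (\sum_(i < 7) \sum_(p < 8 | inc p i) gen0 i p *~ c0 i p) = 0.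
  rewrite phi_sum big1 // => i _; rewrite phi_sum big1 // => p hp.
  by rewrite phiMz phi_gen0 // mul0rz.
have -> : phi (\sum_(i < 7) \sum_(p < 8) gen1 i p *~ c1 i p) = 0.
  rewrite phi_sum big1 // => i _; rewrite phi_sum big1 // => p _.
  by rewrite phiMz phi_gen1 // mul0rz.
have -> : phi (\sum_(i < 7) \sum_(p1 < 8 | inc p1 i) \sum_(p2 < 8 | inc p2 i)
               gen2 i p1 p2 *~ c2 i p1 p2) = 0.
  rewrite phi_sum big1 // => i _; rewrite phi_sum big1 // => p1 h1.
  rewrite phi_sum big1 // => p2 h2.
  by rewrite phiMz phi_gen2 // mul0rz.
rewrite !add0r ?addr0 phi_a0 => /eqP; apply/negP; exact: a0_ne.
Qed.
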